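(* Let $\mathbf{c}=\{c_n\}_{n=-\infty}^{\infty}$ be a complex sequence such that, for some $\theta_0\in[0,\pi/2)$, $$c_n\pm c_{-n}\in K(\theta_0),\qquad n=1,2,\dots.$$ Suppose there exist a natural number $N_0$ and a constant $M(\mathbf c)>0$ such that $$\sum_{n=m}^{2m}|c_n-c_{n+1}|\le M(\mathbf c)\max_{m\le n<m+N_0}|c_n|\qquad\text{for all } m=1,2,\dots.$$ Let $f(x)=\sum_{k=-\infty}^{\infty}c_k e^{ikx}:=\lim_{n\to\infty}\sum_{k=-n}^{n}c_ke^{ikx}$ at every point $x$ where this limit exists, and $S_n(f,x)=\sum_{k=-n}^{n}c_ke^{ikx}$. Then ($f\in C_{2\pi}$ and $\lim_{n\to\infty}\|f-S_n(f)\|=0$) holds if and only if both $$\lim_{n\to\infty}nc_n=0\qquad\text{and}\qquad\sum_{n=1}^{\infty}|c_n+c_{-n}|<\infty.$$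
   Context: For $\theta\in[0,\pi/2]$, $K(\theta)=\{z\in\mathbb C: |\arg z|\le\theta\}$. $C_{2\pi}$ is the space of complex-valued continuous $2\pi$-periodic functions on $\mathbb R$ with norm $\|g\|=\max_{x\in\mathbb R}|g(x)|$. *)

(* Defs.v *)
From Stdlib Require Import Reals ZArith List.
From Coquelicot Require Export Coquelicot.
Open Scope R_scope.

Definition cis (t : R) : C := (cos t, sin t).

(* |arg z| <= theta, with arg the principal argument in (-pi, pi];
   convention: z = 0 belongs to the (closed) sector K(theta). *)
Definition Ksector (theta : R) (z : C) : Prop :=
  z = 0%C \/
  exists t : R, - PI < t <= PI /\ z = (Cmod z * cos t, Cmod z * sin t)%R
                /\ Rabs t <= theta.

(* S_n(x) = sum_{k=-n}^{n} c_k e^{ikx}, reindexed k = j - n, j = 0..2n *)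
Definition Spart (c : Z -> C) (n : nat) (x : R) : C :=
  sum_n (fun j : nat =>
           let k := (Z.of_nat j - Z.of_nat n)%Z in
           Cmult (c k) (cis (IZR k * x))) (2 * n).

Definition var_block (c : Z -> C) (m : nat) : R :=
  sum_n_m (fun n : nat => Cmod (Cminus (c (Z.of_nat n)) (c (Z.of_nat n + 1)%Z)))
          m (2 * m).

(* max_{m <= n < m + N0} |c_n|  (N0 >= 1 assumed where used) *)
Definition max_block (c : Z -> C) (N0 m : nat) : R :=
  fold_right Rmax 0 (map (fun n : nat => Cmod (c (Z.of_nat n))) (seq m N0)).

(* Main.v *)
Require Import Defs.
From Stdlib Require Import Reals ZArith Lia Lra List.
From Coquelicot Require Import Coquelicot.
Open Scope R_scope.

Ltac ceq := unfold Cplus, Cmult, Cminus, Copp, RtoC, cis; simpl; apply injective_projections; simpl; ring.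
Ltac rring := match goal with |- ?a = ?b => change (@eq R a b) end; ring.

Lemma Cmod_le_sum (z : C) : Cmod z <= Rabs (fst z) + Rabs (snd z).
Proof.
  destruct z as [a b]; unfold Cmod; simpl.
  rewrite <- (sqrt_Rsqr (Rabs a + Rabs b)) by (generalize (Rabs_pos a) (Rabs_pos b); lra).
  apply sqrt_le_1_alt. unfold Rsqr.
  generalize (Rabs_pos a) (Rabs_pos b); intros.
  assert (a*a = Rabs a * Rabs a) by (rewrite <- Rabs_mult; symmetry; apply Rabs_pos_eq; nra).
  assert (b*b = Rabs b * Rabs b) by (rewrite <- Rabs_mult; symmetry; apply Rabs_pos_eq; nra). nra.
Qed.

Lemma Cmod_fst (z : C) : Rabs (fst z) <= Cmod z.
Proof. apply re_le_Cmod. Qed.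
Lemma Cmod_snd (z : C) : Rabs (snd z) <= Cmod z.
Proof.
  destruct z as [a b]; unfold Cmod; simpl.
  rewrite <- sqrt_Rsqr_abs. apply sqrt_le_1_alt. unfold Rsqr; nra.
Qed.

Lemma cont_to_eps (g : R -> C) x : continuous g x ->
  forall eps, 0 < eps -> exists d, 0 < d /\ forall y, Rabs (y - x) < d ->
    Cmod (Cminus (g y) (g x)) < eps.
Proof.
  intros Hc eps He.
  destruct (proj1 (filterlim_locally g (g x)) Hc (mkposreal (eps/2) ltac:(lra))) as [d Hd].
  exists d; split; [apply cond_pos|]. intros y Hy.
  destruct (Hd y Hy) as [H1 H2].
  simpl in H1, H2. unfold ball in H1, H2; simpl in H1, H2. unfold AbsRing_ball, abs, minus, plus, opp in H1, H2; simpl in H1, H2.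
  eapply Rle_lt_trans; [apply Cmod_le_sum|].
  destruct (g x), (g y); simpl in *. lra.
Qed.

Lemma eps_to_cont (g : R -> C) x :
  (forall eps, 0 < eps -> exists d, 0 < d /\ forall y, Rabs (y - x) < d ->
    Cmod (Cminus (g y) (g x)) < eps) -> continuous g x.
Proof.
  intros H. apply filterlim_locally. intros eps.
  destruct (H eps (cond_pos eps)) as [d [Hd Hy]].
  exists (mkposreal d Hd). intros y Hb. specialize (Hy y Hb).
  split; simpl; unfold ball; simpl; unfold AbsRing_ball, abs, minus, plus, opp; simpl.
  - generalize (Cmod_fst (g y - g x)); destruct (g x), (g y); simpl in *; lra.
  - generalize (Cmod_snd (g y - g x)); destruct (g x), (g y); simpl in *; lra.
Qed.

Definition tk (c : Z -> C) (k : nat) (x : R) : C :=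
  Cplus (Cmult (c (Z.of_nat k)) (cis (INR k * x)))
        (Cmult (c (- Z.of_nat k)%Z) (cis (- (INR k * x)))).

Lemma Spart_0 c x : Spart c 0 x = c 0%Z.
Proof.
  unfold Spart. simpl. rewrite sum_O. simpl. unfold cis. rewrite Rmult_0_l, cos_0, sin_0.
  destruct (c 0%Z); unfold Cmult; simpl; f_equal; ring.
Qed.

Lemma Spart_S c n x : Spart c (S n) x = Cplus (Spart c n x) (tk c (S n) x).
Proof.
  unfold Spart, sum_n.
  replace (2 * S n)%nat with (S (S (2 * n))) by lia.
  rewrite sum_n_Sm by lia.
  rewrite sum_Sn_m by lia.
  rewrite <- sum_n_m_S.
  rewrite (sum_n_m_ext _ (fun j : nat =>
       let k := (Z.of_nat j - Z.of_nat n)%Z in Cmult (c k) (cis (IZR k * x)))).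
  2:{ intros j. cbv zeta. replace (Z.of_nat (S j) - Z.of_nat (S n))%Z with (Z.of_nat j - Z.of_nat n)%Z by lia. reflexivity. }
  unfold tk. change plus with Cplus.
  replace (Z.of_nat 0 - Z.of_nat (S n))%Z with (- Z.of_nat (S n))%Z by lia.
  replace (Z.of_nat (S (S (2 * n))) - Z.of_nat (S n))%Z with (Z.of_nat (S n)) by lia.
  rewrite opp_IZR, <- INR_IZR_INZ.
  set (A := sum_n_m _ 0 (2*n)).
  replace (- INR (S n) * x) with (- (INR (S n) * x)) by ring.
  destruct A, (c (Z.of_nat (S n))), (c (- Z.of_nat (S n))%Z); unfold Cplus, Cmult; simpl.
  apply injective_projections; simpl; ring.
Qed.

Lemma sum_le_range (a b : nat -> R) n m :
  (forall k, (n <= k <= m)%nat -> a k <= b k) -> sum_n_m a n m <= sum_n_m b n m.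
Proof.
  intros H. destruct (le_lt_dec n m) as [Hnm|Hnm].
  - induction m as [|m IH].
    + assert (n = 0)%nat by lia. subst. rewrite !sum_n_n. apply H; lia.
    + destruct (Nat.eq_dec n (S m)) as [->|Hne].
      * rewrite !sum_n_n. apply H; lia.
      * rewrite !sum_n_Sm by lia. apply Rplus_le_compat.
        apply IH; [intros; apply H; lia | lia]. apply H; lia.
  - rewrite !sum_n_m_zero by lia. apply Rle_refl.
Qed.

Lemma sum_nonneg (a : nat -> R) n m :
  (forall k, (n <= k <= m)%nat -> 0 <= a k) -> 0 <= sum_n_m a n m.
Proof.
  intros H. apply Rle_trans with (sum_n_m (fun _ => 0) n m).
  - rewrite sum_n_m_const. lra.
  - apply sum_le_range. auto.
Qed.

Lemma sum_mono_upper (a : nat -> R) p q q' :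
  (forall k, 0 <= a k) -> (q <= q')%nat -> sum_n_m a p q <= sum_n_m a p q'.
Proof.
  intros Ha Hq. destruct (le_lt_dec p q) as [H|H].
  - rewrite (sum_n_m_Chasles a p q q') by lia. change plus with Rplus.
    assert (0 <= sum_n_m a (S q) q') by (apply sum_nonneg; auto). lra.
  - rewrite (sum_n_m_zero a p q) by lia. apply sum_nonneg; auto.
Qed.

Lemma Rabs_sum (a : nat -> R) n m : Rabs (sum_n_m a n m) <= sum_n_m (fun k => Rabs (a k)) n m.
Proof. apply (norm_sum_n_m a n m). Qed.

Lemma sin_mult_bound n y : Rabs (sin (INR n * y)) <= INR n * Rabs (sin y).
Proof.
  induction n as [|n IH].
  - simpl. rewrite Rmult_0_l, sin_0, Rabs_R0. lra.
  - rewrite S_INR. replace ((INR n + 1) * y) with (INR n * y + y) by ring.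
    rewrite sin_plus.
    eapply Rle_trans; [apply Rabs_triang|]. rewrite !Rabs_mult.
    generalize (Rabs_pos (sin (INR n * y))) (Rabs_pos (sin y)) (COS_bound y) (COS_bound (INR n * y)); intros.
    assert (Rabs (cos y) <= 1) by (apply Rabs_le; lra).
    assert (Rabs (cos (INR n * y)) <= 1) by (apply Rabs_le; lra).
    nra.
Qed.

Lemma sin_kx_bound k x : Rabs (sin (INR k * x)) <= 2 * INR k * Rabs (sin (x / 2)).
Proof.
  replace (INR k * x) with (INR (2 * k) * (x / 2)) by (rewrite mult_INR; simpl; field).
  replace (2 * INR k) with (INR (2 * k)) by (rewrite mult_INR; simpl; ring). apply sin_mult_bound.
Qed.

Lemma sigma_closed p q x : (p <= q)%nat ->
  2 * sin (x / 2) * sum_n_m (fun j => sin (INR j * x)) p q =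
  cos ((INR p - / 2) * x) - cos ((INR q + / 2) * x).
Proof.
  intros Hpq. induction q as [|q IH].
  - assert (p = 0)%nat by lia. subst. rewrite sum_n_n. simpl.
    replace ((0 - /2) * x) with (0 * x - x / 2) by field.
    replace ((0 + /2) * x) with (0 * x + x / 2) by field.
    rewrite cos_minus, cos_plus. ring.
  - destruct (Nat.eq_dec p (S q)) as [->|Hne].
    + rewrite sum_n_n.
      replace ((INR (S q) - /2) * x) with (INR (S q) * x - x / 2) by field.
      replace ((INR (S q) + /2) * x) with (INR (S q) * x + x / 2) by field.
      rewrite cos_minus, cos_plus. ring.
    + rewrite sum_n_Sm by lia. change plus with Rplus.
      rewrite Rmult_plus_distr_l, IH by lia.
      replace ((INR q + /2) * x) with (INR (S q) * x - x / 2) by (rewrite S_INR; field).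
      replace ((INR (S q) + /2) * x) with (INR (S q) * x + x / 2) by field.
      rewrite cos_minus, cos_plus. ring.
Qed.

Lemma sigma_bound p x k : 0 < Rabs (sin (x / 2)) ->
  Rabs (sum_n_m (fun j => sin (INR j * x)) p k) <= / Rabs (sin (x / 2)).
Proof.
  intros Hs. destruct (le_lt_dec p k) as [H|H].
  - generalize (sigma_closed p k x H); intros E.
    assert (Rabs (2 * sin (x / 2) * sum_n_m (fun j => sin (INR j * x)) p k) <= 2).
    { rewrite E. generalize (COS_bound ((INR p - / 2) * x)) (COS_bound ((INR k + / 2) * x)).
      generalize (cos ((INR p - / 2) * x)) (cos ((INR k + / 2) * x)). intros a b Ha Hb.
      apply Rabs_le. lra. }
    rewrite !Rabs_mult in H0. rewrite Rabs_right in H0 by lra.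
    apply Rmult_le_reg_l with (Rabs (sin (x/2))); auto.
    rewrite Rinv_r by lra. lra.
  - rewrite sum_n_m_zero by lia. change (Rabs 0 <= / Rabs (sin (x / 2))).
    rewrite Rabs_R0. left. apply Rinv_0_lt_compat; auto.
Qed.

Lemma abel (u w : nat -> R) p q : (p <= q)%nat ->
  sum_n_m (fun k => u k * w k) p q =
  u (S q) * sum_n_m w p q + sum_n_m (fun k => (u k - u (S k)) * sum_n_m w p k) p q.
Proof.
  intros H. induction q as [|q IH].
  - assert (p = 0)%nat by lia. subst. rewrite !sum_n_n. change (u 0%nat * w 0%nat = u 1%nat * w 0%nat + (u 0%nat - u 1%nat) * w 0%nat)%R. ring.
  - destruct (Nat.eq_dec p (S q)) as [->|Hne].
    + rewrite !sum_n_n. match goal with |- ?a = ?b => change (@eq R a b) end; ring.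
    + rewrite !sum_n_Sm by lia. change plus with Rplus. rewrite IH by lia.
      match goal with |- ?a = ?b => change (@eq R a b) end; ring.
Qed.

Lemma abel_bound (u : nat -> R) x p q : (p <= q)%nat -> 0 < Rabs (sin (x / 2)) ->
  Rabs (sum_n_m (fun k => u k * sin (INR k * x)) p q) <=
  / Rabs (sin (x / 2)) * (Rabs (u (S q)) + sum_n_m (fun k => Rabs (u k - u (S k))) p q).
Proof.
  intros H Hs. rewrite abel by auto.
  set (B := / Rabs (sin (x / 2))).
  assert (HB : forall k, Rabs (sum_n_m (fun j => sin (INR j * x)) p k) <= B) by (intros; apply sigma_bound; auto).
  eapply Rle_trans; [apply Rabs_triang|]. rewrite Rabs_mult.
  rewrite Rmult_plus_distr_l. apply Rplus_le_compat.
  - rewrite Rmult_comm. apply Rmult_le_compat_r; [apply Rabs_pos| apply HB].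
  - eapply Rle_trans; [apply Rabs_sum|].
    rewrite <- (sum_n_m_mult_l B). apply sum_n_m_le. intros k. change (mult B (Rabs (u k - u (S k)))) with (B * Rabs (u k - u (S k))).
    rewrite Rabs_mult, Rmult_comm. apply Rmult_le_compat_r; [apply Rabs_pos| apply HB].
Qed.

Lemma exists_t (s : R) m : INR m * s <= 1 \/ exists t, (t < m)%nat /\ INR t * s <= 1 < INR (S t) * s.
Proof.
  induction m as [|m IH].
  - left. simpl. lra.
  - destruct IH as [H|[t [H1 H2]]].
    + destruct (Rle_lt_dec (INR (S m) * s) 1) as [H'|H'].
      * left; auto.
      * right. exists m. split; [lia|]. split; auto.
    + right. exists t. split; [lia|auto].
Qed.

Section Core.
Variables (u : nat -> R) (P : nat) (eps V : R).
Hypothesis HP : (1 <= P)%nat.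
Hypothesis Heps : 0 <= eps.
Hypothesis HV : 0 <= V.
Hypothesis Hu : forall k, (P <= k)%nat -> INR k * Rabs (u k) <= eps.
Hypothesis Hd : forall p q, (P <= p)%nat ->
  sum_n_m (fun k => Rabs (u k - u (S k))) p q <= V * eps / INR p.

Lemma INR_pos k : (1 <= k)%nat -> 0 < INR k.
Proof. intros; apply lt_0_INR; lia. Qed.

Lemma u_bound k : (P <= k)%nat -> Rabs (u k) <= eps / INR k.
Proof.
  intros H. assert (0 < INR k) by (apply INR_pos; lia).
  apply Rmult_le_reg_l with (INR k); auto. field_simplify; [|lra]. generalize (Hu k H). lra.
Qed.

Lemma direct_part x n t : (P <= S n)%nat -> INR t * Rabs (sin (x / 2)) <= 1 ->
  Rabs (sum_n_m (fun k => u k * sin (INR k * x)) (S n) t) <= 2 * eps.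
Proof.
  intros Hn Ht. set (s := Rabs (sin (x / 2))).
  assert (Hs : 0 <= s) by apply Rabs_pos.
  eapply Rle_trans; [apply Rabs_sum|].
  destruct (le_lt_dec (S n) t) as [Hnt|Hnt].
  2:{ rewrite sum_n_m_zero by lia. change (0 <= 2 * eps). lra. }
  apply Rle_trans with (sum_n_m (fun _ => 2 * eps * s) (S n) t).
  - apply sum_le_range. intros k Hk. rewrite Rabs_mult.
    generalize (sin_kx_bound k x) (Hu k ltac:(lia)) (Rabs_pos (u k)) (Rabs_pos (sin (INR k * x))); fold s; intros.
    nra.
  - rewrite sum_n_m_const.
    assert (INR (S t - S n) <= INR t) by (apply le_INR; lia).
    assert (0 <= INR (S t - S n)) by apply pos_INR. fold s in Ht.
    assert (0 <= (INR t - INR (S t - S n)) * (2 * eps * s)) by (apply Rmult_le_pos; nra).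
    assert (0 <= eps * (1 - INR t * s)) by (apply Rmult_le_pos; lra).
    nra.
Qed.

Lemma abel_part x p m : (P <= p)%nat -> 1 < INR p * Rabs (sin (x / 2)) ->
  Rabs (sum_n_m (fun k => u k * sin (INR k * x)) p m) <= (1 + V) * eps.
Proof.
  intros Hp Hps. set (s := Rabs (sin (x / 2))) in *.
  assert (Hs : 0 <= s) by apply Rabs_pos.
  assert (HpI : 0 < INR p) by (apply INR_pos; lia).
  assert (Hs' : 0 < s) by (destruct Hs as [Hs|Hs]; auto; rewrite <- Hs in Hps; lra).
  destruct (le_lt_dec p m) as [Hpm|Hpm].
  2:{ rewrite sum_n_m_zero by lia. change (Rabs 0 <= (1 + V) * eps). rewrite Rabs_R0. nra. }
  eapply Rle_trans; [apply abel_bound; auto|]. fold s.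
  assert (H1 : Rabs (u (S m)) <= eps / INR p).
  { eapply Rle_trans; [apply u_bound; lia|].
    unfold Rdiv. apply Rmult_le_compat_l; auto. apply Rinv_le_contravar; auto. apply le_INR; lia. }
  generalize (Hd p m Hp); intros H2.
  apply Rle_trans with (/ s * ((1 + V) * eps / INR p)).
  - apply Rmult_le_compat_l. left; apply Rinv_0_lt_compat; auto.
    replace ((1 + V) * eps / INR p) with (eps / INR p + V * eps / INR p) by (field; lra). lra.
  - replace (/ s * ((1 + V) * eps / INR p)) with ((1 + V) * eps * / (INR p * s)) by (field; lra).
    rewrite <- (Rmult_1_r ((1 + V) * eps)) at 2. apply Rmult_le_compat_l; [nra|].
    rewrite <- Rinv_1. apply Rinv_le_contravar; lra.
Qed.

Lemma core_bound x n m : (P <= n)%nat ->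
  Rabs (sum_n_m (fun k => u k * sin (INR k * x)) (S n) m) <= (3 + V) * eps.
Proof.
  intros Hn. set (s := Rabs (sin (x / 2))).
  assert (Hs : 0 <= s) by apply Rabs_pos.
  destruct (exists_t s m) as [H|[t [Ht1 [Ht2 Ht3]]]].
  - eapply Rle_trans; [apply direct_part; auto|]. nra.
  - destruct (le_lt_dec t n) as [Htn|Htn].
    + eapply Rle_trans; [apply abel_part; [lia|]|]. 
      * apply Rlt_le_trans with (INR (S t) * s); auto. apply Rmult_le_compat_r; auto. apply le_INR; lia.
      * nra.
    + rewrite (sum_n_m_Chasles _ (S n) t m) by lia. change plus with Rplus.
      eapply Rle_trans; [apply Rabs_triang|].
      generalize (direct_part x n t ltac:(lia) Ht2) (abel_part x (S t) m ltac:(lia) Ht3). lra.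
Qed.
End Core.

Lemma fst_sum (f : nat -> C) a b : fst (sum_n_m f a b) = sum_n_m (fun k => fst (f k)) a b.
Proof.
  destruct (le_lt_dec a b) as [H|H].
  - induction b as [|b IH].
    + assert (a = 0)%nat by lia. subst. rewrite !sum_n_n. reflexivity.
    + destruct (Nat.eq_dec a (S b)) as [->|Hne].
      * rewrite !sum_n_n. reflexivity.
      * rewrite !sum_n_Sm by lia. rewrite <- IH by lia. reflexivity.
  - rewrite !sum_n_m_zero by lia. reflexivity.
Qed.

Lemma snd_sum (f : nat -> C) a b : snd (sum_n_m f a b) = sum_n_m (fun k => snd (f k)) a b.
Proof.
  destruct (le_lt_dec a b) as [H|H].
  - induction b as [|b IH].
    + assert (a = 0)%nat by lia. subst. rewrite !sum_n_n. reflexivity.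
    + destruct (Nat.eq_dec a (S b)) as [->|Hne].
      * rewrite !sum_n_n. reflexivity.
      * rewrite !sum_n_Sm by lia. rewrite <- IH by lia. reflexivity.
  - rewrite !sum_n_m_zero by lia. reflexivity.
Qed.

Lemma Cmod_sum (f : nat -> C) a b : Cmod (sum_n_m f a b) <= sum_n_m (fun k => Cmod (f k)) a b.
Proof. apply (norm_sum_n_m f a b). Qed.

Lemma sum_Rscal (r : R) (f : nat -> R) a b : sum_n_m (fun k => r * f k) a b = r * sum_n_m f a b.
Proof. apply (sum_n_m_mult_l (K := R_Ring)). Qed.

Lemma Spart_diff c x n m : (n <= m)%nat ->
  Cminus (Spart c m x) (Spart c n x) = sum_n_m (fun k => tk c k x) (S n) m.
Proof.
  intros H. induction m as [|m IH].
  - assert (n = 0)%nat by lia. subst. rewrite sum_n_m_zero by lia.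
    destruct (Spart c 0 x). unfold Cminus, Cplus, Copp; simpl. apply injective_projections; simpl; ring.
  - destruct (Nat.eq_dec n (S m)) as [->|Hne].
    + rewrite sum_n_m_zero by lia. destruct (Spart c (S m) x). unfold Cminus, Cplus, Copp; simpl. apply injective_projections; simpl; ring.
    + rewrite sum_n_Sm by lia. rewrite <- IH by lia. rewrite Spart_S.
      change plus with Cplus.
      destruct (Spart c m x), (Spart c n x), (tk c (S m) x). unfold Cminus, Cplus, Copp; simpl. apply injective_projections; simpl; ring.
Qed.

Lemma Cmod_cis t : Cmod (cis t) = 1.
Proof.
  unfold Cmod, cis. simpl fst; simpl snd. replace (cos t ^ 2 + sin t ^ 2) with 1. apply sqrt_1.
  rewrite <- (sin2_cos2 t). unfold Rsqr. ring.
Qed.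

Definition ak (c : Z -> C) (k : nat) : C := Cplus (c (Z.of_nat k)) (c (- Z.of_nat k)%Z).

Lemma tk_decomp c k x : tk c k x =
  Cplus (Cmult (ak c k) (cis (- (INR k * x))))
        ((- 2 * snd (c (Z.of_nat k)) * sin (INR k * x), 2 * fst (c (Z.of_nat k)) * sin (INR k * x))).
Proof.
  unfold tk, ak, cis. rewrite cos_neg, sin_neg.
  destruct (c (Z.of_nat k)), (c (- Z.of_nat k)%Z). unfold Cplus, Cmult; simpl.
  apply injective_projections; simpl; ring.
Qed.

Lemma tk_sum_bound c x n m :
  Cmod (sum_n_m (fun k => tk c k x) n m) <=
  sum_n_m (fun k => Cmod (ak c k)) n m
  + 2 * Rabs (sum_n_m (fun k => snd (c (Z.of_nat k)) * sin (INR k * x)) n m)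
  + 2 * Rabs (sum_n_m (fun k => fst (c (Z.of_nat k)) * sin (INR k * x)) n m).
Proof.
  rewrite (sum_n_m_ext _ _ _ _ (fun k => tk_decomp c k x)).
  rewrite (sum_n_m_plus (G := C_AbelianMonoid)).
  eapply Rle_trans; [apply Cmod_triangle|].
  rewrite Rplus_assoc. apply Rplus_le_compat.
  - eapply Rle_trans; [apply Cmod_sum|]. apply sum_n_m_le. intros k.
    rewrite Cmod_mult, Cmod_cis. lra.
  - eapply Rle_trans; [apply Cmod_le_sum|].
    rewrite fst_sum, snd_sum. simpl.
    rewrite (sum_n_m_ext _ (fun k => (-2) * (snd (c (Z.of_nat k)) * sin (INR k * x)))) by (intros; rring).
    rewrite (sum_n_m_ext (fun k => 2 * fst (c (Z.of_nat k)) * sin (INR k * x)) (fun k => 2 * (fst (c (Z.of_nat k)) * sin (INR k * x)))) by (intros; rring).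
    rewrite !sum_Rscal. rewrite !Rabs_mult.
    replace (Rabs (-2)) with 2 by (rewrite Rabs_left; lra).
    rewrite (Rabs_right 2) by lra. lra.
Qed.

Definition dC (c : Z -> C) (k : nat) : R := Cmod (Cminus (c (Z.of_nat k)) (c (Z.of_nat (S k)))).

Section Var.
Variables (c : Z -> C) (N0 : nat) (M : R) (P : nat) (eps : R).
Hypothesis HM : 0 < M.
Hypothesis HP : (1 <= P)%nat.
Hypothesis Heps : 0 <= eps.
Hypothesis Hvar : forall m : nat, (1 <= m)%nat -> var_block c m <= M * max_block c N0 m.
Hypothesis Hc : forall k, (P <= k)%nat -> INR k * Cmod (c (Z.of_nat k)) <= eps.

Lemma max_block_bound m : (P <= m)%nat -> max_block c N0 m <= eps / INR m.
Proof.
  intros Hm. unfold max_block.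
  assert (Hm0 : 0 < INR m) by (apply lt_0_INR; lia).
  assert (forall len st, (m <= st)%nat ->
    fold_right Rmax 0 (map (fun n : nat => Cmod (c (Z.of_nat n))) (seq st len)) <= eps / INR m).
  { induction len as [|len IH]; intros st Hst.
    - simpl. apply Rdiv_le_0_compat; auto.
    - simpl. apply Rmax_lub; [|apply IH; lia].
      assert (0 < INR st) by (apply lt_0_INR; lia).
      apply Rle_trans with (eps / INR st).
      + apply Rmult_le_reg_l with (INR st); auto. field_simplify; [|lra]. apply Hc. lia.
      + unfold Rdiv. apply Rmult_le_compat_l; auto. apply Rinv_le_contravar; auto. apply le_INR; lia. }
  apply H. lia.
Qed.

Lemma dC_nonneg k : 0 <= dC c k.
Proof. apply Cmod_ge_0. Qed.

Lemma var_block_eq m : var_block c m = sum_n_m (dC c) m (2 * m).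
Proof.
  unfold var_block. apply sum_n_m_ext. intros n. unfold dC. rewrite Nat2Z.inj_succ. reflexivity.
Qed.

Lemma var_bound_aux d : forall p q, (q - p < d)%nat -> (P <= p)%nat ->
  sum_n_m (dC c) p q <= 2 * M * eps / INR p.
Proof.
  induction d as [|d IH]; intros p q Hd Hp; [lia|].
  assert (Hp0 : 0 < INR p) by (apply lt_0_INR; lia).
  assert (HB : sum_n_m (dC c) p (2 * p) <= M * eps / INR p).
  { rewrite <- var_block_eq. eapply Rle_trans; [apply Hvar; lia|].
    unfold Rdiv. rewrite Rmult_assoc. apply Rmult_le_compat_l; [lra|]. apply max_block_bound; auto. }
  assert (0 <= M * eps / INR p) by (apply Rdiv_le_0_compat; auto; nra).
  destruct (le_lt_dec q (2 * p)) as [Hq|Hq].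
  - eapply Rle_trans; [apply sum_mono_upper; [apply dC_nonneg|exact Hq]|].
    eapply Rle_trans; [exact HB|]. unfold Rdiv. nra.
  - rewrite (sum_n_m_Chasles _ p (2 * p - 1) q) by lia. change plus with Rplus.
    replace (S (2 * p - 1)) with (2 * p)%nat by lia.
    assert (sum_n_m (dC c) p (2 * p - 1) <= M * eps / INR p).
    { eapply Rle_trans; [|exact HB]. apply sum_mono_upper; [apply dC_nonneg|lia]. }
    assert (sum_n_m (dC c) (2 * p) q <= 2 * M * eps / INR (2 * p)) by (apply IH; lia).
    rewrite mult_INR in H1. simpl (INR 2) in H1.
    replace (2 * M * eps / ((1 + 1) * INR p)) with (M * eps / INR p) in H1 by (field; lra).
    replace (2 * M * eps / INR p) with (M * eps / INR p + M * eps / INR p) by (field; lra).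
    lra.
Qed.

Lemma var_bound p q : (P <= p)%nat -> sum_n_m (dC c) p q <= 2 * M * eps / INR p.
Proof. intros. apply (var_bound_aux (S (q - p))); auto. Qed.
End Var.

Lemma fst_diff_le (a b : C) : Rabs (fst a - fst b) <= Cmod (Cminus a b).
Proof. replace (fst a - fst b) with (fst (Cminus a b)) by (destruct a, b; simpl; ring). apply Cmod_fst. Qed.
Lemma snd_diff_le (a b : C) : Rabs (snd a - snd b) <= Cmod (Cminus a b).
Proof. replace (snd a - snd b) with (snd (Cminus a b)) by (destruct a, b; simpl; ring). apply Cmod_snd. Qed.

Lemma suff_uc (c : Z -> C) (N0 : nat) (M : R) (HM : 0 < M)
  (Hvar : forall m : nat, (1 <= m)%nat -> var_block c m <= M * max_block c N0 m)
  (Hlim : is_lim_seq (fun n : nat => INR n * Cmod (c (Z.of_nat n))) 0)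
  (Hser : ex_series (fun n : nat => Cmod (ak c (S n)))) :
  forall eps, 0 < eps -> exists N, forall n m, (N <= n)%nat -> (n <= m)%nat -> forall x,
    Cmod (Cminus (Spart c m x) (Spart c n x)) <= eps.
Proof.
  intros eps He.
  set (e1 := eps / (8 * (3 + 2 * M))).
  assert (He1 : 0 < e1) by (unfold e1; apply Rdiv_lt_0_compat; lra).
  apply is_lim_seq_spec in Hlim. destruct (Hlim (mkposreal e1 He1)) as [P0 HP0]. simpl in HP0.
  apply (@Cauchy_ex_series R_AbsRing R_CompleteNormedModule) in Hser. destruct (Hser (mkposreal (eps/2) ltac:(lra))) as [N1 HN1]. simpl in HN1.
  set (P := Nat.max P0 1).
  assert (Hc : forall k, (P <= k)%nat -> INR k * Cmod (c (Z.of_nat k)) <= e1).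
  { intros k Hk. specialize (HP0 k ltac:(lia)). rewrite Rminus_0_r in HP0.
    apply Rabs_lt_between in HP0. lra. }
  exists (Nat.max P N1). intros n m Hn Hm x.
  rewrite Spart_diff by auto.
  eapply Rle_trans; [apply tk_sum_bound|].
  assert (Htail : sum_n_m (fun k => Cmod (ak c k)) (S n) m <= eps / 2).
  { destruct m as [|m']. { rewrite sum_n_m_zero by lia. change (0 <= eps/2). lra. }
    destruct (Nat.eq_dec n (S m')) as [->|Hne]. { rewrite sum_n_m_zero by lia. change (0 <= eps/2). lra. }
    rewrite <- sum_n_m_S. specialize (HN1 n m' ltac:(lia) ltac:(lia)).
    eapply Rle_trans; [apply Rle_abs|]. left. exact HN1. }
  assert (Hcore : forall (u : nat -> R), (forall k, Rabs (u k) <= Cmod (c (Z.of_nat k))) ->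
     (forall k, Rabs (u k - u (S k)) <= dC c k) ->
     Rabs (sum_n_m (fun k => u k * sin (INR k * x)) (S n) m) <= (3 + 2 * M) * e1).
  { intros u Hu1 Hu2. apply (core_bound u P e1 (2 * M)); try lia; try lra.
    - intros k Hk. eapply Rle_trans; [|apply (Hc k Hk)]. apply Rmult_le_compat_l; [apply pos_INR|auto].
    - intros p q Hp. eapply Rle_trans; [apply sum_n_m_le; apply Hu2|].
      replace (2 * M * e1 / INR p) with (2 * M * e1 / INR p) by ring.
      apply (var_bound c N0 M P e1); auto; try lia; try lra. }
  assert (H1 := Hcore (fun k => snd (c (Z.of_nat k))) (fun k => Cmod_snd _) (fun k => snd_diff_le _ _)).
  assert (H2 := Hcore (fun k => fst (c (Z.of_nat k))) (fun k => Cmod_fst _) (fun k => fst_diff_le _ _)).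
  simpl in H1, H2.
  assert (E : 4 * ((3 + 2 * M) * e1) = eps / 2) by (unfold e1; field; lra).
  lra.
Qed.

Lemma Cmod_minus_sym (a b : C) : Cmod (Cminus a b) = Cmod (Cminus b a).
Proof.
  replace (Cminus b a) with (Copp (Cminus a b)) by (destruct a, b; unfold Cminus, Copp, Cplus; simpl; apply injective_projections; simpl; ring).
  unfold Cmod. destruct (Cminus a b); simpl. f_equal. ring.
Qed.

Lemma Cmod_tri3 (a b d : C) : Cmod (Cminus a d) <= Cmod (Cminus a b) + Cmod (Cminus b d).
Proof.
  replace (Cminus a d) with (Cplus (Cminus a b) (Cminus b d)) by (destruct a, b, d; unfold Cminus, Copp, Cplus; simpl; apply injective_projections; simpl; ring).
  apply Cmod_triangle.
Qed.

Lemma Cball_of (a b : C) e : Cmod (Cminus a b) < e -> ball b e a.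
Proof.
  intros H. split; simpl; unfold ball; simpl; unfold AbsRing_ball, abs, minus, plus, opp; simpl.
  - eapply Rle_lt_trans; [|apply H]. apply (Rle_trans _ _ _ (Rle_refl _) (fst_diff_le a b)).
  - eapply Rle_lt_trans; [|apply H]. apply (Rle_trans _ _ _ (Rle_refl _) (snd_diff_le a b)).
Qed.

Lemma continuous_cis (g : R -> R) x : continuous g x -> continuous (fun y => cis (g y)) x.
Proof.
  intros Hg. apply filterlim_locally. intros eps.
  assert (H1 := proj1 (filterlim_locally _ _) (continuous_cos_comp g x Hg) eps).
  assert (H2 := proj1 (filterlim_locally _ _) (continuous_sin_comp g x Hg) eps).
  eapply filter_imp; [|apply (filter_and _ _ H1 H2)].
  intros y [Ha Hb]. split; assumption.
Qed.

Lemma continuous_Spart c n x : continuous (Spart c n) x.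
Proof.
  induction n as [|n IH].
  - apply (continuous_ext (fun _ => c 0%Z)). intros; symmetry; apply Spart_0. apply continuous_const.
  - apply (continuous_ext (fun y => Cplus (Spart c n y) (tk c (S n) y))). intros; symmetry; apply Spart_S.
    apply (continuous_plus (V := C_NormedModule)); auto.
    unfold tk. apply (continuous_plus (V := C_NormedModule)).
    + apply (continuous_scal_r (V := C_NormedModule)). apply continuous_cis.
      apply (continuous_scal_r (V := R_NormedModule)). apply continuous_id.
    + apply (continuous_scal_r (V := C_NormedModule)). apply continuous_cis.
      apply (continuous_ext (fun y : R => scal (- INR (S n)) y)). intros; unfold scal; simpl; unfold mult; simpl; ring.
      apply (continuous_scal_r (V := R_NormedModule)). apply continuous_id.
Qed.

Lemma Spart_periodic c n x : Spart c n (x + 2 * PI) = Spart c n x.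
Proof.
  induction n as [|n IH].
  - rewrite !Spart_0. reflexivity.
  - rewrite !Spart_S, IH. f_equal. unfold tk, cis.
    replace (INR (S n) * (x + 2 * PI)) with (INR (S n) * x + 2 * INR (S n) * PI) by ring.
    rewrite !cos_neg, !sin_neg, cos_period, sin_period. reflexivity.
Qed.

Lemma lim_le (u : nat -> R) l a e N : Un_cv u l -> (forall m, (N <= m)%nat -> Rabs (u m - a) <= e) ->
  Rabs (l - a) <= e.
Proof.
  intros Hu Hb. destruct (Rle_lt_dec (Rabs (l - a)) e) as [H|H]; auto. exfalso.
  destruct (Hu (Rabs (l - a) - e) ltac:(lra)) as [N' HN']. unfold Rdist in HN'.
  specialize (HN' (Nat.max N N') ltac:(lia)). specialize (Hb (Nat.max N N') ltac:(lia)).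
  set (v := u (Nat.max N N')) in *.
  assert (Rabs (l - a) <= Rabs (v - l) + Rabs (v - a)).
  { replace (l - a) with (- (v - l) + (v - a)) by ring. eapply Rle_trans; [apply Rabs_triang|]. rewrite Rabs_Ropp. lra. }
  lra.
Qed.

Lemma eq_of_small (a b : R) : (forall e, 0 < e -> Rabs (a - b) <= e) -> a = b.
Proof.
  intros H. destruct (Req_dec a b) as [E|E]; auto. exfalso.
  assert (0 < Rabs (a - b)) by (apply Rabs_pos_lt; lra).
  specialize (H (Rabs (a - b) / 2) ltac:(lra)). lra.
Qed.

Definition UCauchy (S : nat -> R -> C) := forall eps, 0 < eps -> exists N, forall n m, (N <= n)%nat -> (n <= m)%nat -> forall x,
    Cmod (Cminus (S m x) (S n x)) <= eps.

Definition LHS (S : nat -> R -> C) :=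
  exists f : R -> C,
     (forall x : R, filterlim (fun n => S n x) eventually (locally (f x))) /\
     (forall x : R, continuous f x) /\
     (forall x : R, f (x + 2 * PI) = f x) /\
     (forall eps : R, 0 < eps -> exists N : nat, forall n : nat, (N <= n)%nat ->
        forall x : R, Cmod (Cminus (f x) (S n x)) <= eps).

Lemma UC_sym S : UCauchy S -> forall eps, 0 < eps -> exists N, forall n m, (N <= n)%nat -> (N <= m)%nat -> forall x,
    Cmod (Cminus (S m x) (S n x)) <= eps.
Proof.
  intros H eps He. destruct (H eps He) as [N HN]. exists N. intros n m Hn Hm x.
  destruct (le_lt_dec n m). apply HN; auto. rewrite Cmod_minus_sym. apply HN; auto; lia.
Qed.

Lemma UC_to_LHS (S : nat -> R -> C) :
  (forall n x, continuous (S n) x) -> (forall n x, S n (x + 2 * PI) = S n x) ->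
  UCauchy S -> LHS S.
Proof.
  intros Hc Hp HU.
  assert (H1 : forall x, Cauchy_crit (fun n => fst (S n x))).
  { intros x e He. destruct (UC_sym S HU (e/2) ltac:(lra)) as [N HN]. exists N. intros n m Hn Hm.
    unfold Rdist. eapply Rle_lt_trans; [apply fst_diff_le|]. eapply Rle_lt_trans; [apply HN; eauto|]. lra. }
  assert (H2 : forall x, Cauchy_crit (fun n => snd (S n x))).
  { intros x e He. destruct (UC_sym S HU (e/2) ltac:(lra)) as [N HN]. exists N. intros n m Hn Hm.
    unfold Rdist. eapply Rle_lt_trans; [apply snd_diff_le|]. eapply Rle_lt_trans; [apply HN; eauto|]. lra. }
  set (f := fun x => (proj1_sig (Rcomplete.R_complete _ (H1 x)), proj1_sig (Rcomplete.R_complete _ (H2 x))) : C).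
  assert (Hunif : forall eps, 0 < eps -> exists N, forall n, (N <= n)%nat -> forall x, Cmod (Cminus (f x) (S n x)) <= eps).
  { intros eps He. destruct (HU (eps/2) ltac:(lra)) as [N HN]. exists N. intros n Hn x.
    eapply Rle_trans; [apply Cmod_le_sum|].
    assert (A1 : Rabs (fst (f x) - fst (S n x)) <= eps / 2).
    { unfold f; simpl. destruct (Rcomplete.R_complete _ (H1 x)) as [l Hl]; simpl.
      apply (lim_le _ l _ _ n Hl). intros m Hm. eapply Rle_trans; [apply fst_diff_le|]. apply HN; auto. }
    assert (A2 : Rabs (snd (f x) - snd (S n x)) <= eps / 2).
    { unfold f; simpl. destruct (Rcomplete.R_complete _ (H2 x)) as [l Hl]; simpl.
      apply (lim_le _ l _ _ n Hl). intros m Hm. eapply Rle_trans; [apply snd_diff_le|]. apply HN; auto. }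
    change (Rabs (fst (f x) + - fst (S n x)) + Rabs (snd (f x) + - snd (S n x)) <= eps). unfold Rminus in A1, A2. lra. }
  exists f. split; [|split; [|split]]; auto.
  - intros x. apply filterlim_locally. intros eps.
    destruct (Hunif (eps/2) ltac:(destruct eps; simpl; lra)) as [N HN]. exists N. intros n Hn.
    apply Cball_of. rewrite Cmod_minus_sym. eapply Rle_lt_trans; [apply HN; auto|]. destruct eps; simpl; lra.
  - intros x. apply eps_to_cont. intros e He.
    destruct (Hunif (e/4) ltac:(lra)) as [N HN].
    destruct (cont_to_eps (S N) x (Hc N x) (e/4) ltac:(lra)) as [d [Hd Hy]].
    exists d. split; auto. intros y Hyx.
    eapply Rle_lt_trans; [apply (Cmod_tri3 _ (S N y))|].
    eapply Rle_lt_trans; [apply Rplus_le_compat_l; apply (Cmod_tri3 _ (S N x))|].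
    generalize (HN N (le_n _) y) (Hy y Hyx) (HN N (le_n _) x). rewrite (Cmod_minus_sym (S N x)). lra.
  - intros x. 
    assert (forall e, 0 < e -> Cmod (Cminus (f (x + 2 * PI)) (f x)) <= e).
    { intros e He. destruct (Hunif (e/2) ltac:(lra)) as [N HN].
      eapply Rle_trans; [apply (Cmod_tri3 _ (S N x))|]. rewrite <- (Hp N x) at 1.
      generalize (HN N (le_n _) (x + 2 * PI)) (HN N (le_n _) x). rewrite (Cmod_minus_sym (S N x)). lra. }
    apply injective_projections; apply eq_of_small; intros e He.
    + eapply Rle_trans; [apply fst_diff_le|]. auto.
    + eapply Rle_trans; [apply snd_diff_le|]. auto.
Qed.

Lemma Ksector_re theta z : 0 <= theta < PI / 2 -> Ksector theta z -> cos theta * Cmod z <= fst z.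
Proof.
  intros Ht [Hz|[t [Ht1 [Ez Hta]]]].
  - subst. rewrite Cmod_0. simpl. lra.
  - assert (E : fst z = Cmod z * cos t) by apply (f_equal fst Ez).
    rewrite E. rewrite Rmult_comm. apply Rmult_le_compat_l; [apply Cmod_ge_0|].
    assert (cos t = cos (Rabs t)).
    { destruct (Rle_dec 0 t). rewrite Rabs_right; lra. rewrite Rabs_left by lra. rewrite cos_neg; auto. }
    rewrite H. apply cos_decr_1; try lra; apply Rabs_pos.
Qed.

Lemma sin_half_lb p k : (1 <= p)%nat -> (S p <= k <= 2 * p)%nat ->
  / 2 <= sin (INR k * (PI / (4 * INR p))).
Proof.
  intros Hp Hk. assert (0 < INR p) by (apply lt_0_INR; lia).
  assert (INR (S p) <= INR k) by (apply le_INR; lia).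
  assert (INR k <= INR (2 * p)) by (apply le_INR; lia).
  rewrite S_INR in H0. rewrite mult_INR in H1. simpl (INR 2) in H1.
  assert (HPI := PI_RGT_0).
  assert (PI / 4 <= INR k * (PI / (4 * INR p))).
  { apply Rmult_le_reg_r with (4 * INR p / PI). apply Rdiv_lt_0_compat; lra.
    field_simplify; try lra. }
  assert (INR k * (PI / (4 * INR p)) <= PI / 2).
  { apply Rmult_le_reg_r with (4 * INR p / PI). apply Rdiv_lt_0_compat; lra.
    field_simplify; try lra. }
  apply Rle_trans with (sin (PI / 4)); [|apply sin_incr_1; lra]. rewrite sin_PI4.
  assert (sqrt 2 <= 2).
  { assert (sqrt 2 <= sqrt (2*2)) by (apply sqrt_le_1_alt; lra). rewrite sqrt_square in H4 by lra. exact H4. }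
  assert (0 < sqrt 2) by (apply sqrt_lt_R0; lra).
  apply Rmult_le_reg_l with (2 * sqrt 2); [lra|]. field_simplify; lra.
Qed.

Lemma tk_at_0 c k : tk c k 0 = ak c k.
Proof.
  unfold tk, ak, cis. rewrite Rmult_0_r, Ropp_0, cos_0, sin_0.
  destruct (c (Z.of_nat k)), (c (- Z.of_nat k)%Z). unfold Cplus, Cmult; simpl. apply injective_projections; simpl; ring.
Qed.

Definition bk (c : Z -> C) (k : nat) : C := Cminus (c (Z.of_nat k)) (c (- Z.of_nat k)%Z).

Lemma tk_odd c k x : snd (Cminus (tk c k x) (tk c k (- x))) = 2 * fst (bk c k) * sin (INR k * x).
Proof.
  unfold tk, bk, cis. replace (INR k * - x) with (- (INR k * x)) by ring.
  rewrite !cos_neg, !sin_neg, Ropp_involutive.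
  destruct (c (Z.of_nat k)), (c (- Z.of_nat k)%Z). unfold Cminus, Cplus, Cmult, Copp; simpl. ring.
Qed.

Lemma c_from_ab c k : Cmod (c (Z.of_nat k)) <= (Cmod (ak c k) + Cmod (bk c k)) / 2.
Proof.
  replace (c (Z.of_nat k)) with (Cmult (/2)%R (Cplus (ak c k) (bk c k))).
  - rewrite Cmod_mult. rewrite Cmod_R. rewrite Rabs_right by lra.
    generalize (Cmod_triangle (ak c k) (bk c k)). lra.
  - unfold ak, bk. destruct (c (Z.of_nat k)), (c (- Z.of_nat k)%Z). unfold Cminus, Cplus, Cmult, Copp, RtoC; simpl.
    apply injective_projections; simpl; field.
Qed.

Lemma sum_Rminus (f g : nat -> R) a b : sum_n_m (fun k => f k - g k) a b = sum_n_m f a b - sum_n_m g a b.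
Proof.
  rewrite (sum_n_m_ext _ (fun k => plus (f k) ((-1) * g k))) by (intros; unfold plus; simpl; rring).
  rewrite sum_n_m_plus, sum_Rscal. unfold plus; simpl. ring.
Qed.

Section Nec.
Variables (c : Z -> C) (theta0 : R).
Hypothesis Htheta : 0 <= theta0 < PI / 2.
Hypothesis Hsect : forall n : nat, (1 <= n)%nat ->
     Ksector theta0 (Cplus (c (Z.of_nat n)) (c (- Z.of_nat n)%Z)) /\
     Ksector theta0 (Cminus (c (Z.of_nat n)) (c (- Z.of_nat n)%Z)).

Lemma kappa_pos : 0 < cos theta0.
Proof. apply cos_gt_0; lra. Qed.

Lemma a_block n m : (n <= m)%nat ->
  cos theta0 * sum_n_m (fun k => Cmod (ak c k)) (S n) m <= Cmod (Cminus (Spart c m 0) (Spart c n 0)).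
Proof.
  intros H. rewrite <- sum_Rscal.
  eapply Rle_trans; [apply sum_le_range; intros k Hk; apply (Ksector_re theta0 (ak c k) Htheta); apply (proj1 (Hsect k ltac:(lia)))|].
  rewrite Spart_diff by auto. rewrite <- fst_sum.
  rewrite (sum_n_m_ext (fun k => tk c k 0) (ak c)) by (intros; apply tk_at_0).
  eapply Rle_trans; [apply Rle_abs|]. apply Cmod_fst.
Qed.

Lemma b_block p : (1 <= p)%nat ->
  cos theta0 * sum_n_m (fun k => Cmod (bk c k)) (S p) (2 * p) <=
  Cmod (Cminus (Spart c (2 * p) (PI / (4 * INR p))) (Spart c p (PI / (4 * INR p)))) +
  Cmod (Cminus (Spart c (2 * p) (- (PI / (4 * INR p)))) (Spart c p (- (PI / (4 * INR p))))).
Proof.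
  intros Hp. set (x := PI / (4 * INR p)).
  rewrite !Spart_diff by lia. rewrite <- sum_Rscal.
  apply Rle_trans with (sum_n_m (fun k => 2 * fst (bk c k) * sin (INR k * x)) (S p) (2 * p)).
  - apply sum_le_range. intros k Hk.
    assert (Hb := Ksector_re theta0 (bk c k) Htheta (proj2 (Hsect k ltac:(lia)))).
    assert (Hs := sin_half_lb p k Hp Hk). fold x in Hs.
    assert (0 <= cos theta0 * Cmod (bk c k)) by (apply Rmult_le_pos; [left; apply kappa_pos|apply Cmod_ge_0]).
    nra.
  - rewrite (sum_n_m_ext _ (fun k => snd (tk c k x) - snd (tk c k (- x)))).
    2:{ intros k. rewrite <- tk_odd. destruct (tk c k x), (tk c k (-x)); simpl. rring. }
    rewrite sum_Rminus, <- !snd_sum.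
    generalize (Cmod_snd (sum_n_m (fun k => tk c k x) (S p) (2 * p))) (Cmod_snd (sum_n_m (fun k => tk c k (- x)) (S p) (2 * p))).
    intros H1 H2. apply Rabs_le_between in H1. apply Rabs_le_between in H2. lra.
Qed.
End Nec.

Lemma Cmod_step (a b : C) : Cmod b <= Cmod a + Cmod (Cminus a b).
Proof.
  replace b with (Cplus a (Copp (Cminus a b))) at 1 by (destruct a, b; unfold Cminus, Copp, Cplus; simpl; apply injective_projections; simpl; ring).
  eapply Rle_trans; [apply Cmod_triangle|]. rewrite Cmod_opp. lra.
Qed.

Section GM.
Variables (c : Z -> C) (N0 : nat) (M : R).
Hypothesis HN0 : (1 <= N0)%nat.
Hypothesis HM : 0 < M.
Hypothesis Hvar : forall m : nat, (1 <= m)%nat -> var_block c m <= M * max_block c N0 m.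
Let g := fun j : nat => Cmod (c (Z.of_nat j)).

Lemma tele m d : g (m + S d)%nat <= g m + sum_n_m (dC c) m (m + d).
Proof.
  induction d as [|d IH].
  - rewrite Nat.add_0_r, sum_n_n. unfold g, dC. replace (m + 1)%nat with (S m) by lia. apply Cmod_step.
  - replace (m + S d)%nat with (S (m + d)) in IH by lia.
    replace (m + S d)%nat with (S (m + d)) by lia.
    replace (m + S (S d))%nat with (S (S (m + d))) by lia.
    rewrite sum_n_Sm by lia. change plus with Rplus.
    unfold g, dC in *.
    generalize (Cmod_step (c (Z.of_nat (S (m + d)))) (c (Z.of_nat (S (S (m + d)))))). lra.
Qed.

Lemma max_le_sum len st : fold_right Rmax 0 (map g (seq st len)) <= sum_n_m g st (st + len - 1).
Proof.
  revert st. induction len as [|len IH]; intros st.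
  - simpl. apply sum_nonneg. intros; apply Cmod_ge_0.
  - simpl (seq st (S len)). simpl (map g _). simpl (fold_right _ _ _).
    replace (st + S len - 1)%nat with (st + len)%nat by lia.
    rewrite sum_Sn_m by lia. change plus with Rplus.
    specialize (IH (S st)). replace (S st + len - 1)%nat with (st + len)%nat in IH by lia.
    assert (0 <= g st) by apply Cmod_ge_0.
    assert (0 <= sum_n_m g (S st) (st + len)) by (apply sum_nonneg; intros; apply Cmod_ge_0).
    apply Rmax_lub; lra.
Qed.

Lemma g_le_max m : g m <= max_block c N0 m.
Proof.
  unfold max_block. destruct N0 as [|n0]; [lia|]. simpl. apply Rmax_l.
Qed.

Lemma cn_le_window m n : (1 <= m)%nat -> (m <= n <= 2 * m)%nat ->
  g n <= (1 + M) * sum_n_m g m (m + N0 - 1).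
Proof.
  intros Hm Hn.
  assert (Hmax : max_block c N0 m <= sum_n_m g m (m + N0 - 1)) by apply max_le_sum.
  assert (Hgm := g_le_max m).
  assert (Hv := Hvar m Hm). rewrite var_block_eq in Hv.
  assert (g n <= g m + sum_n_m (dC c) m (2 * m)).
  { destruct (Nat.eq_dec n m) as [->|Hne]. 
    - assert (0 <= sum_n_m (dC c) m (2 * m)) by (apply sum_nonneg; intros; apply dC_nonneg). lra.
    - replace n with (m + S (n - m - 1))%nat by lia. eapply Rle_trans; [apply tele|].
      apply Rplus_le_compat_l. apply sum_mono_upper; [apply dC_nonneg|lia]. }
  nra.
Qed.

Lemma windows n a r : (1 <= a)%nat -> (forall i, (i < r)%nat -> (a + i * N0 <= n <= 2 * (a + i * N0))%nat) ->
  INR r * g n <= (1 + M) * sum_n_m g a (a + r * N0 - 1).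
Proof.
  intros Ha. induction r as [|r IH]; intros Hi.
  - simpl. rewrite Rmult_0_l. apply Rmult_le_pos; [lra|]. apply sum_nonneg; intros; apply Cmod_ge_0.
  - rewrite S_INR. rewrite (sum_n_m_Chasles _ a (a + r * N0 - 1) (a + S r * N0 - 1)) by (simpl; lia).
    change plus with Rplus. rewrite Rmult_plus_distr_l, Rmult_plus_distr_r, Rmult_1_l.
    apply Rplus_le_compat.
    + apply IH. intros i Hir. apply Hi. lia.
    + replace (S (a + r * N0 - 1)) with (a + r * N0)%nat by lia.
      replace (a + S r * N0 - 1)%nat with (a + r * N0 + N0 - 1)%nat by (simpl; lia).
      apply cn_le_window; [lia|]. apply Hi. lia.
Qed.
End GM.

Lemma nlim (c : Z -> C) (N0 : nat) (M : R) (HN0 : (1 <= N0)%nat) (HM : 0 < M)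
  (Hvar : forall m : nat, (1 <= m)%nat -> var_block c m <= M * max_block c N0 m)
  (HB : forall eps, 0 < eps -> exists N, forall p, (N <= p)%nat ->
         sum_n_m (fun j => Cmod (c (Z.of_nat j))) (S p) (2 * p) <= eps) :
  is_lim_seq (fun n : nat => INR n * Cmod (c (Z.of_nat n))) 0.
Proof.
  apply is_lim_seq_spec. intros eps.
  assert (HN0r : 1 <= INR N0) by (apply (le_INR 1); lia).
  set (K := 6 * INR N0 * (1 + M)).
  assert (HK : 0 < K) by (unfold K; nra).
  destruct (HB (eps / (2 * K)) ltac:(apply Rdiv_lt_0_compat; [apply cond_pos|lra])) as [N HN].
  set (P := Nat.max N (Nat.max (2 * N0) 1)).
  exists (2 * P + 2)%nat. intros n Hn.
  set (p := (n / 2)%nat). set (r := (p / N0)%nat).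
  assert (Hp1 := Nat.div_mod_eq n 2). assert (Hp2 := Nat.mod_upper_bound n 2 ltac:(lia)).
  assert (Hr1 := Nat.div_mod_eq p N0). assert (Hr2 := Nat.mod_upper_bound p N0 ltac:(lia)).
  fold p in Hp1. fold r in Hr1.
  assert (HpP : (P <= p)%nat) by lia.
  assert (Hrp : (N0 * r <= p)%nat) by lia.
  assert (Hw := windows c N0 M HN0 HM Hvar n (S p) r ltac:(lia)).
  assert (Hw' : INR r * Cmod (c (Z.of_nat n)) <= (1 + M) * sum_n_m (fun j => Cmod (c (Z.of_nat j))) (S p) (S p + r * N0 - 1)).
  { apply Hw. intros i Hi. assert (S i * N0 <= r * N0)%nat by (apply Nat.mul_le_mono_r; lia).
    simpl in H. lia. }
  assert (Hs : sum_n_m (fun j => Cmod (c (Z.of_nat j))) (S p) (S p + r * N0 - 1) <= eps / (2 * K)).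
  { eapply Rle_trans; [|apply (HN p ltac:(lia))]. apply sum_mono_upper; [intros; apply Cmod_ge_0|lia]. }
  assert (Hnr : (n <= 6 * N0 * r)%nat) by lia.
  apply le_INR in Hnr. rewrite !mult_INR in Hnr. simpl (INR 6) in Hnr.
  assert (0 <= Cmod (c (Z.of_nat n))) by apply Cmod_ge_0.
  rewrite Rminus_0_r, Rabs_right by (apply Rle_ge, Rmult_le_pos; [apply pos_INR|auto]).
  apply Rle_lt_trans with (6 * INR N0 * (INR r * Cmod (c (Z.of_nat n)))).
  - replace (6 * INR N0 * (INR r * Cmod (c (Z.of_nat n)))) with ((6 * INR N0 * INR r) * Cmod (c (Z.of_nat n))) by ring.
    apply Rmult_le_compat_r; auto. lra.
  - apply Rle_lt_trans with (6 * INR N0 * ((1 + M) * (eps / (2 * K)))).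
    + apply Rmult_le_compat_l; [lra|]. eapply Rle_trans; [apply Hw'|]. apply Rmult_le_compat_l; [lra|auto].
    + replace (6 * INR N0 * ((1 + M) * (eps / (2 * K)))) with (eps / 2) by (unfold K; field; lra).
      destruct eps; simpl; lra.
Qed.

Theorem theorem1 (c : Z -> C) (theta0 : R)
  (Htheta : 0 <= theta0 < PI / 2)
  (Hsect : forall n : nat, (1 <= n)%nat ->
     Ksector theta0 (Cplus (c (Z.of_nat n)) (c (- Z.of_nat n)%Z)) /\
     Ksector theta0 (Cminus (c (Z.of_nat n)) (c (- Z.of_nat n)%Z)))
  (N0 : nat) (HN0 : (1 <= N0)%nat) (M : R) (HM : 0 < M)
  (Hvar : forall m : nat, (1 <= m)%nat -> var_block c m <= M * max_block c N0 m) :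
  (exists f : R -> C,
     (forall x : R, filterlim (fun n => Spart c n x) eventually (locally (f x))) /\
     (forall x : R, continuous f x) /\
     (forall x : R, f (x + 2 * PI) = f x) /\
     (forall eps : R, 0 < eps -> exists N : nat, forall n : nat, (N <= n)%nat ->
        forall x : R, Cmod (Cminus (f x) (Spart c n x)) <= eps))
  <->
  (is_lim_seq (fun n : nat => INR n * Cmod (c (Z.of_nat n))) 0 /\
   ex_series (fun n : nat => Cmod (Cplus (c (Z.of_nat (S n))) (c (- Z.of_nat (S n))%Z)))).
Proof.
  split.
  - intros [f [_ [_ [_ Hunif]]]].
    assert (UCp : forall eps, 0 < eps -> exists N, forall n m, (N <= n)%nat -> (N <= m)%nat -> forall x,
               Cmod (Cminus (Spart c m x) (Spart c n x)) <= eps).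
    { intros eps He. destruct (Hunif (eps / 2) ltac:(lra)) as [N HN]. exists N. intros n m Hn Hm x.
      eapply Rle_trans; [apply (Cmod_tri3 _ (f x))|]. rewrite Cmod_minus_sym.
      generalize (HN m Hm x) (HN n Hn x). lra. }
    assert (Hk := kappa_pos theta0 Htheta).
    split.
    + apply nlim with N0 M; auto.
      intros eps He. destruct (UCp (cos theta0 * eps / 2) ltac:(apply Rdiv_lt_0_compat; nra)) as [N HN].
      exists (Nat.max N 1). intros p Hp.
      assert (Ha := a_block c theta0 Htheta Hsect p (2 * p) ltac:(lia)).
      assert (Hb := b_block c theta0 Htheta Hsect p ltac:(lia)).
      generalize (HN p (2 * p)%nat ltac:(lia) ltac:(lia) 0) (HN p (2 * p)%nat ltac:(lia) ltac:(lia) (PI / (4 * INR p)))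
                 (HN p (2 * p)%nat ltac:(lia) ltac:(lia) (- (PI / (4 * INR p)))). intros E1 E2 E3.
      apply Rle_trans with (sum_n_m (fun k => / 2 * (Cmod (ak c k) + Cmod (bk c k))) (S p) (2 * p)).
      { apply sum_le_range. intros k _. generalize (c_from_ab c k). lra. }
      rewrite sum_Rscal, (sum_n_m_plus (G := R_AbelianMonoid)).
      set (SA := sum_n_m (fun k => Cmod (ak c k)) (S p) (2 * p)) in *.
      set (SB := sum_n_m (fun k => Cmod (bk c k)) (S p) (2 * p)) in *.
      change (/ 2 * (SA + SB) <= eps).
      assert (cos theta0 * (SA + SB) <= 3 * (cos theta0 * eps / 2)) by lra.
      assert (SA + SB <= 3 * eps / 2).
      { apply Rmult_le_reg_l with (cos theta0); auto. lra. }
      lra.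
    + apply (@ex_series_Cauchy R_AbsRing R_CompleteNormedModule).
      intros eps. destruct (UCp (cos theta0 * eps / 2) ltac:(apply Rdiv_lt_0_compat; [apply Rmult_lt_0_compat; [auto|apply cond_pos]|lra])) as [N HN].
      exists N. intros n m Hn Hm.
      destruct (le_lt_dec n m) as [Hnm|Hnm].
      * change (Rabs (sum_n_m (fun n0 : nat => Cmod (ak c (S n0))) n m) < eps).
        rewrite (sum_n_m_S (fun k => Cmod (ak c k))).
        assert (Ha := a_block c theta0 Htheta Hsect n (S m) ltac:(lia)).
        assert (HH := HN n (S m) Hn ltac:(lia) 0).
        assert (0 <= sum_n_m (fun k => Cmod (ak c k)) (S n) (S m)) by (apply sum_nonneg; intros; apply Cmod_ge_0).
        rewrite Rabs_right by lra.
        assert (sum_n_m (fun k => Cmod (ak c k)) (S n) (S m) <= eps / 2).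
        { apply Rmult_le_reg_l with (cos theta0); auto. lra. }
        destruct eps; simpl in *; lra.
      * rewrite sum_n_m_zero by lia. change (Rabs 0 < eps). rewrite Rabs_R0. apply cond_pos.
  - intros [Hlim Hser].
    apply (UC_to_LHS (Spart c)).
    + intros; apply continuous_Spart.
    + intros; apply Spart_periodic.
    + intros eps He. exact (suff_uc c N0 M HM Hvar Hlim Hser eps He).
Qed.
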